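(* Let $M=\frac{1}{3^{2/3}-2}$. Let the open intervals $J_n^k\subset[0,M]$ ($n\ge 1$, $1\le k\le 2^{n-1}$) be constructed as follows: $J_1^1$ is the open interval of length $3^{-2/3}$ centered at the midpoint of $[0,M]$; for $n\ge 2$, the intervals $J_n^1,\dots,J_n^{2^{n-1}}$ are the open intervals of length $(3^{2/3})^{-n}$ centered at the midpoints of the $2^{n-1}$ connected components of $[0,M]\setminus(J_1\cup\dots\cup J_{n-1})$, where $J_m=\bigcup_{k=1}^{2^{m-1}}J_m^k$. Let $A=[0,M]\setminus\bigcup_{n\ge1}J_n$. Define $g:[0,M]\to\mathbb{R}$ by $g=0$ on $A$ and $g(x)=\frac{4}{\mathcal{L}(J_n^k)^{1/2}}\mathrm{dist}(x,\partial J_n^k)$ for $x\in J_n^k$, and define $f:[0,M]\to[0,1]$ by $f(x)=\int_0^x g(t)\,dt$. Let $C\subset[0,1]$ be the ternary Cantor set. Then: (1) $f$ is $C^1$; (2) $f'(x)=0$ if and only if $x\in A$; (3) $f(A)=C$.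
   Context: $\mathcal{L}$ denotes Lebesgue measure (length); $\partial J$ is the set of endpoints of an interval $J$. The ternary Cantor set is $C=[0,1]\setminus\bigcup_{n\ge1}\bigcup_{k=1}^{2^{n-1}}I_n^k$, where the open intervals $I_n^k$ of length $3^{-n}$ are centered at the midpoints of the connected components of $[0,1]$ minus the previously removed intervals of stages $1,\dots,n-1$. *)

(* Defs.v *)
From HB Require Import structures.
From mathcomp Require Import all_boot all_order all_algebra.
From mathcomp Require Import all_classical all_reals all_analysis.
Set Implicit Arguments. Unset Strict Implicit. Unset Printing Implicit Defensive.
Import Order.TTheory GRing.Theory Num.Theory.
Import numFieldNormedType.Exports.
Local Open Scope classical_set_scope.
Local Open Scope ring_scope.

Section Construction.
Variable R : realType.

(* Generic "middle-interval removal" construction on [0, L]: at stage n >= 1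
   one removes, from each connected component [a,b] of what is left after
   stages 1..n-1, the open interval of length q^-n centered at (a+b)/2.
   Intervals are encoded as pairs (left endpoint, right endpoint). *)

Fixpoint comps (L q : R) (n : nat) : seq (R * R) :=
  match n with
  | 0%N => [:: (0, L)]
  | m.+1 =>
      let h := (q ^+ m.+1)^-1 / 2 in
      flatten [seq [:: (ab.1, (ab.1 + ab.2) / 2 - h); ((ab.1 + ab.2) / 2 + h, ab.2)]
              | ab <- comps L q m]
  end.

(* Jstage L q n (for n >= 1) = the list of the 2^(n-1) open intervals
   J_n^k (k = 1..2^(n-1)) removed at stage n, as endpoint pairs. *)
Definition Jstage (L q : R) (n : nat) : seq (R * R) :=
  let h := (q ^+ n)^-1 / 2 in
  [seq ((ab.1 + ab.2) / 2 - h, (ab.1 + ab.2) / 2 + h) | ab <- comps L q n.-1].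

Definition removed (L q : R) : set R :=
  [set x | exists n : nat, (0 < n)%N /\
     exists2 ab, ab \in Jstage L q n & ab.1 < x < ab.2].

Definition cantor_ternary : set R := `[0, 1] `\` removed 1 3.

Definition q23 : R := 3 `^ (2 / 3).
Definition Mconst : R := (q23 - 2)^-1.
Definition Aset : set R := `[0, Mconst] `\` removed Mconst q23.

(* derivative of f at x relative to the set D (one-sided at endpoints of an
   interval) *)
Definition has_deriv_within (D : set R) (f : R -> R) (x l : R) : Prop :=
  (fun y => (f y - f x) / (y - x)) @ within D (x^') --> l.

End Construction.

(* Main.v *)
Require Import Defs.
From HB Require Import structures.
From mathcomp Require Import all_boot all_order all_algebra.
From mathcomp Require Import all_classical all_reals all_analysis.
From mathcomp Require Import ring lra.
Import Order.TTheory GRing.Theory Num.Theory.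
Import numFieldNormedType.Exports.
Local Open Scope classical_set_scope.
Local Open Scope ring_scope.

Section Gen.
Variable R : realType.
Variables (L q : R).
Hypotheses (hq : 2 < q) (hL : L * (q - 2) = 1).

Definition hh (k : nat) : R := (q ^+ k)^-1 / 2.
Definition split_ k (ab : R * R) :=
  [:: (ab.1, (ab.1 + ab.2) / 2 - hh k); ((ab.1 + ab.2) / 2 + hh k, ab.2)].
Definition mid_ k (ab : R * R) := ((ab.1 + ab.2) / 2 - hh k, (ab.1 + ab.2) / 2 + hh k).
Definition cc := L - L / q.
Definition P0 (ab : R * R) := (ab.1 / q, ab.2 / q).
Definition P1 (ab : R * R) := (ab.1 / q + cc, ab.2 / q + cc).

Lemma q_gt0 : 0 < q. Proof. by apply: lt_trans hq. Qed.
Lemma q_neq0 : q != 0. Proof. by rewrite gt_eqF // q_gt0. Qed.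
Lemma L_gt0 : 0 < L.
Proof.
have : 0 < L * (q - 2) by rewrite hL.
by rewrite pmulr_lgt0 // subr_gt0.
Qed.
Lemma Lq_gt0 : 0 < L / q. Proof. by rewrite divr_gt0 ?L_gt0 ?q_gt0. Qed.
Lemma Lq_eq : L / q = L / 2 - q^-1 / 2.
Proof.
have e : L * q = L * (q - 2) + 2 * L by ring.
rewrite hL in e.
apply: (mulIf q_neq0); rewrite divfK ?q_neq0 // mulrBl.
have -> : q^-1 / 2 * q = 1 / 2 by field; by rewrite ?expf_neq0 ?q_neq0.
have -> : L / 2 * q = (L * q) / 2 by ring.
rewrite e; lra.
Qed.
Lemma cc_eq : cc = L / 2 + q^-1 / 2.
Proof. rewrite /cc Lq_eq; lra. Qed.
Lemma Lq_lt_cc : L / q < cc.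
Proof. rewrite cc_eq Lq_eq; have : 0 < q^-1 by rewrite invr_gt0 q_gt0. lra. Qed.
Lemma cc_lt_L : cc < L.
Proof. have := Lq_gt0; rewrite /cc; lra. Qed.
Lemma cc_gt0 : 0 < cc.
Proof. have := Lq_gt0; have := Lq_lt_cc; lra. Qed.
Lemma qcc_gt : L < q * cc.
Proof.
rewrite /cc mulrBr (mulrC q (L / q)) divfK ?q_neq0 //.
have : 0 < L * (q - 2) by rewrite hL.
have := L_gt0; nra.
Qed.

Lemma hhS k : hh k.+1 = hh k / q.
Proof. rewrite /hh exprS invfM; field; by rewrite ?expf_neq0 ?q_neq0. Qed.

Lemma split_P0 k ab : split_ k.+1 (P0 ab) = map P0 (split_ k ab).
Proof.
rewrite /split_ /P0 /= hhS; congr [:: (_, _); (_, _)];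
  field; by rewrite ?expf_neq0 ?q_neq0.
Qed.
Lemma split_P1 k ab : split_ k.+1 (P1 ab) = map P1 (split_ k ab).
Proof.
rewrite /split_ /P1 /= hhS; congr [:: (_, _); (_, _)];
  field; by rewrite ?expf_neq0 ?q_neq0.
Qed.
Lemma mid_P0 k ab : mid_ k.+1 (P0 ab) = P0 (mid_ k ab).
Proof. rewrite /mid_ /P0 /= hhS; congr (_, _); field; by rewrite ?expf_neq0 ?q_neq0. Qed.
Lemma mid_P1 k ab : mid_ k.+1 (P1 ab) = P1 (mid_ k ab).
Proof. rewrite /mid_ /P1 /= hhS; congr (_, _); field; by rewrite ?expf_neq0 ?q_neq0. Qed.

Lemma compsS m : comps L q m.+1 = flatten (map (split_ m.+1) (comps L q m)).
Proof. by []. Qed.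
Lemma JstageE n : Jstage L q n = map (mid_ n) (comps L q n.-1).
Proof. by []. Qed.

Lemma comps_succ n :
  comps L q n.+1 = map P0 (comps L q n) ++ map P1 (comps L q n).
Proof.
elim: n => [|n IH].
  rewrite compsS /= /split_ /P0 /P1 /hh /= expr1.
  by congr [:: (_, _); (_, _)]; rewrite ?mul0r ?add0r ?cc_eq ?Lq_eq; lra.
rewrite [LHS]compsS [in LHS]IH map_cat flatten_cat -!map_comp.
rewrite (eq_map (split_P0 n.+1)) (eq_map (split_P1 n.+1)).
by rewrite [in RHS]compsS !map_flatten -!map_comp.
Qed.

Lemma Jstage1 : Jstage L q 1 = [:: (L / q, cc)].
Proof.
rewrite JstageE /= /mid_ /= /hh expr1; congr [:: (_, _)].
  by rewrite add0r -Lq_eq.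
by rewrite add0r -cc_eq.
Qed.

Lemma Jstage_succ n : (0 < n)%N ->
  Jstage L q n.+1 = map P0 (Jstage L q n) ++ map P1 (Jstage L q n).
Proof.
case: n => // n _.
have -> : Jstage L q n.+2 = map (mid_ n.+2) (comps L q n.+1) by [].
have -> : Jstage L q n.+1 = map (mid_ n.+1) (comps L q n) by [].
rewrite comps_succ map_cat -!map_comp.
by rewrite (eq_map (mid_P0 n.+1)) (eq_map (mid_P1 n.+1)) !map_comp.
Qed.

Lemma Jstage_len n ab : ab \in Jstage L q n -> ab.2 - ab.1 = (q ^+ n)^-1.
Proof. rewrite JstageE => /mapP[cd _ ->] /=; rewrite /hh; lra. Qed.

Definition Jset n x := exists2 ab, ab \in Jstage L q n & ab.1 < x < ab.2.

Lemma Jset1 x : Jset 1 x <-> L / q < x < cc.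
Proof.
rewrite /Jset Jstage1; split; first by case=> ab; rewrite inE => /eqP ->.
by move=> h; exists (L / q, cc); rewrite ?inE.
Qed.

Lemma ltdivq a x : (a / q < x) = (a < q * x).
Proof. by rewrite ltr_pdivrMr ?q_gt0 // mulrC. Qed.
Lemma ltqdiv a x : (x < a / q) = (q * x < a).
Proof. by rewrite ltr_pdivlMr ?q_gt0 // mulrC. Qed.

Lemma Jset_succ n x : (0 < n)%N ->
  Jset n.+1 x <-> Jset n (q * x) \/ Jset n (q * (x - cc)).
Proof.
move=> n0; rewrite /Jset Jstage_succ //; split.
  case=> ab; rewrite mem_cat => /orP[] /mapP[ab' ab'in ->] /=.
    by rewrite ltdivq ltqdiv => h; left; exists ab'.
  rewrite -(ltrBrDr _ x cc) -(ltrBlDr x cc) ltdivq ltqdiv => h; right; exists ab' => //.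
case=> -[ab abin]; rewrite /= => h.
  by exists (P0 ab); rewrite ?mem_cat ?map_f //= ltdivq ltqdiv.
exists (P1 ab); rewrite ?mem_cat ?map_f ?orbT //=.
by rewrite -(ltrBrDr _ x cc) -(ltrBlDr x cc) ltdivq ltqdiv.
Qed.

Lemma qcc_eq : q * cc = q * L - L.
Proof. by rewrite /cc mulrBr (mulrC q (L / q)) divfK ?q_neq0. Qed.

Lemma Jset_in n x : (0 < n)%N -> Jset n x -> 0 < x < L.
Proof.
elim: n x => // -[_ x _|n IH x _].
  by move/Jset1; have := Lq_gt0; have := cc_lt_L; lra.
move=> hJ; have := q_gt0; have := L_gt0; have := cc_gt0; have := qcc_eq => e *.
move: hJ; case/Jset_succ => // h; have /andP[h1 h2] := IH _ isT h; apply/andP; split; nra.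
Qed.

Lemma qdivK y : q * (y / q) = y.
Proof. by rewrite mulrC divfK ?q_neq0. Qed.

Lemma removed_T0 y : 0 <= y <= L -> (removed L q (y / q) <-> removed L q y).
Proof.
move=> /andP[y0 yL]; split.
  case=> n [n0 h]; case: n n0 h => [//|[_ h|m _ h]].
    by move/Jset1: h => /andP[+ _]; rewrite ltdivq qdivK; lra.
  case/(@Jset_succ m.+1 _ isT): h => h.
    by rewrite qdivK in h; exists m.+1.
  move/Jset_in: h => /(_ isT) /andP[+ _].
  by rewrite mulrBr qdivK; have := qcc_gt; lra.
case=> n [n0 h]; exists n.+1; split => //.
by apply/(@Jset_succ _ _ n0); left; rewrite qdivK.
Qed.

Lemma removed_T1 y : 0 <= y <= L -> (removed L q (y / q + cc) <-> removed L q y).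
Proof.
move=> /andP[y0 yL]; split.
  case=> n [n0 h]; case: n n0 h => [//|[_ h|m _ h]].
    move/Jset1: h => /andP[_]; have : 0 <= y / q.
      by rewrite divr_ge0 // ltW // q_gt0.
    lra.
  case/(@Jset_succ m.+1 _ isT): h => h.
    move/Jset_in: h => /(_ isT) /andP[_].
    by rewrite mulrDr qdivK; have := qcc_gt; lra.
  by rewrite addrK qdivK in h; exists m.+1.
case=> n [n0 h]; exists n.+1; split => //.
by apply/(@Jset_succ _ _ n0); right; rewrite addrK qdivK.
Qed.

Lemma Jstage_P0 n ab : (0 < n)%N -> ab \in Jstage L q n -> P0 ab \in Jstage L q n.+1.
Proof. by move=> n0 h; rewrite Jstage_succ // mem_cat map_f. Qed.
Lemma Jstage_P1 n ab : (0 < n)%N -> ab \in Jstage L q n -> P1 ab \in Jstage L q n.+1.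
Proof. by move=> n0 h; rewrite Jstage_succ // mem_cat map_f ?orbT. Qed.

End Gen.

Section Consts.
Variable R : realType.

Definition s3 : R := 3 `^ (3^-1).
Lemma s3_ge0 : 0 <= s3. Proof. exact: powR_ge0. Qed.
Lemma s3_cube : s3 ^+ 3 = 3.
Proof.
by rewrite /s3 -powR_mulrn ?powR_ge0 // -powRrM mulVf ?powRr1.
Qed.
Lemma q23E : q23 R = s3 ^+ 2.
Proof.
rewrite /q23 /s3 -powR_mulrn ?powR_ge0 // -powRrM; congr (_ `^ _).
by rewrite mulrC.
Qed.
Lemma s3_gt0 : 0 < s3.
Proof. by rewrite /s3 powR_gt0. Qed.
Lemma sqrt_q23 : Num.sqrt (q23 R) = s3.
Proof. by rewrite q23E sqrtr_sqr ger0_norm // s3_ge0. Qed.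
Lemma q23_gt2 : 2 < q23 R.
Proof.
rewrite q23E; have := s3_cube; have := s3_gt0.
move=> h1 h2; rewrite ltNge; apply/negP => h3.
have h4 : s3 ^+ 3 = s3 * s3 ^+ 2 by rewrite exprS.
nra.
Qed.
Lemma q23_s3 : q23 R * s3 = 3.
Proof. by rewrite q23E -exprSr s3_cube. Qed.
Lemma Mconst_eq : Mconst R * (q23 R - 2) = 1.
Proof. by rewrite /Mconst mulVf // subr_eq0 gt_eqF // q23_gt2. Qed.

End Consts.

Set Implicit Arguments. Unset Strict Implicit.
Lemma min_cases (R : realType) (u v : R) :
  (Num.min u v = u /\ u <= v) \/ (Num.min u v = v /\ v <= u).
Proof.
by case: (leP u v) => h; [left | right; split => //; apply: ltW].
Qed.

Arguments min_cases {R}.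

Section Main.
Variable R : realType.
Variable g : R -> R.
Hypothesis hA : forall x, @Aset R x -> g x = 0.
Hypothesis hJ : forall (n : nat) (ab : R * R), (0 < n)%N ->
  ab \in Jstage (Mconst R) (q23 R) n ->
  forall x, ab.1 < x < ab.2 ->
    g x = 4 / Num.sqrt (ab.2 - ab.1) * Num.min (x - ab.1) (ab.2 - x).

Local Notation M := (Mconst R).
Local Notation q := (q23 R).
Let hq : 2 < q := q23_gt2 R.
Let hM : M * (q - 2) = 1 := Mconst_eq R.
Let M_gt0 : 0 < M := @L_gt0 _ _ _ hq hM.

Definition tent (a b x : R) := 4 / Num.sqrt (b - a) * Num.min (x - a) (b - x).

Lemma tent_gt0 a b x : a < x < b -> 0 < tent a b x.
Proof.
move=> /andP[h1 h2]; rewrite /tent mulr_gt0 ?divr_gt0 ?sqrtr_gt0 ?subr_gt0 //.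
  by apply: lt_trans h2.
by case: (min_cases (x - a) (b - x)) => -[-> _]; rewrite subr_gt0.
Qed.

Lemma inJ x : removed M q x ->
  exists n ab, [/\ (0 < n)%N, ab \in Jstage M q n, ab.1 < x < ab.2 & g x = tent ab.1 ab.2 x].
Proof.
case=> n [n0 [ab abin h]]; exists n, ab; split => //.
exact: (hJ n0 abin h).
Qed.

Lemma AorJ x : 0 <= x <= M -> @Aset R x \/ removed M q x.
Proof.
move=> h; have [r|r] := pselect (removed M q x); [by right|left].
by split => //=; rewrite in_itv.
Qed.

Lemma g_pos x : removed M q x -> 0 < g x.
Proof. by case/inJ => n [ab [_ _ h ->]]; apply: tent_gt0. Qed.

Lemma g_ge0 x : 0 <= x <= M -> 0 <= g x.
Proof. by case/AorJ => [/hA -> //|/g_pos/ltW]. Qed.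

Lemma g_sq x y : @Aset R x -> 0 <= y <= M -> g y ^+ 2 <= 8 * `|y - x|.
Proof.
move=> xA /AorJ [/hA ->|]; first by rewrite expr0n /= mulr_ge0.
case/inJ => n [[a b] [n0 abin /= /andP[ay yb] ->]].
have xnot : ~ (a < x < b).
  by case: xA => _ xr hx; apply: xr; exists n; split => //; exists (a, b).
set t := Num.sqrt (b - a).
have t0 : 0 < t by rewrite sqrtr_gt0 subr_gt0 (lt_trans ay).
have tt : t ^+ 2 = b - a by rewrite sqr_sqrtr // subr_ge0 ltW // (lt_trans ay).
have hmu := min_cases (y - a) (b - y).
rewrite /tent -/t.
set mu := Num.min _ _ in hmu *.
have mu0 : 0 <= mu by case: hmu => -[-> _]; lra.
have mu2 : 2 * mu <= b - a by case: hmu => -[-> ?]; lra.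
have mud : mu <= `|y - x|.
  have : x <= a \/ b <= x.
    by case: (leP x a) => ?; [left|right]; rewrite // leNgt; apply/negP => ?; apply: xnot; apply/andP.
  have n1 : y - x <= `|y - x| := ler_norm _.
  have n2 : x - y <= `|y - x| by rewrite -normrN opprB ler_norm.
  case=> hx; case: hmu => -[-> ?]; lra.

have e : 4 / t * mu * t = 4 * mu by rewrite mulrAC divfK ?gt_eqF.
have h1 : (4 / t * mu) ^+ 2 * t ^+ 2 <= 8 * `|y - x| * t ^+ 2.
  rewrite -exprMn e tt; nra.
by rewrite -(ler_pM2r (exprn_gt0 2 t0)).
Qed.

Lemma min_le (u v : R) : Num.min u v <= u /\ Num.min u v <= v.
Proof. by case: (min_cases u v) => -[-> ?]; split => //; lra. Qed.

Lemma min_absdiff (u1 v1 u2 v2 d : R) : `|u1 - u2| <= d -> `|v1 - v2| <= d ->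
  `|Num.min u1 v1 - Num.min u2 v2| <= d.
Proof.
rewrite !ler_norml => /andP[? ?] /andP[? ?].
by case: (min_cases u1 v1) => -[-> ?]; case: (min_cases u2 v2) => -[-> ?];
  apply/andP; split; lra.
Qed.

Lemma tent_lip a b x y : a < b ->
  `|tent a b y - tent a b x| <= 4 / Num.sqrt (b - a) * `|y - x|.
Proof.
move=> ab; rewrite /tent -mulrBr normrM ger0_norm; last first.
  by rewrite divr_ge0 // sqrtr_ge0.
apply: ler_wpM2l; first by rewrite divr_ge0 // sqrtr_ge0.
apply: min_absdiff; first by have -> : y - a - (x - a) = y - x by ring.
have -> : b - y - (b - x) = - (y - x) by ring.
by rewrite normrN.
Qed.
Lemma g_ed x : 0 <= x <= M -> forall e, 0 < e ->
  exists2 d, 0 < d & forall y, 0 <= y <= M -> `|y - x| < d -> `|g y - g x| < e.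
Proof.
move=> xM e e0; case: (AorJ xM) => [xA|].
  exists (e ^+ 2 / 8); first by rewrite divr_gt0 // exprn_gt0.
  move=> y yM yx; rewrite (hA xA) subr0 ger0_norm ?g_ge0 //.
  have h1 := g_sq xA yM; have h2 := g_ge0 yM.
  have h3 : 8 * `|y - x| < e ^+ 2.
    by rewrite mulrC -ltr_pdivlMr.
  rewrite ltNge; apply/negP => h4; nra.
case/inJ => n [[a b] [n0 abin /= /andP[ax xb] ->]].
have ab : a < b by apply: lt_trans xb.
set k := 4 / Num.sqrt (b - a).
have k0 : 0 < k by rewrite divr_gt0 // sqrtr_gt0 subr_gt0.
exists (Num.min (Num.min (x - a) (b - x)) (e / k)).
  by case: (min_cases (Num.min (x - a) (b - x)) (e / k)) => -[-> _];
    [case: (min_cases (x - a) (b - x)) => -[-> _]; rewrite subr_gt0|rewrite divr_gt0].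
move=> y yM.
have [m1 m2] := min_le (Num.min (x - a) (b - x)) (e / k).
have [m3 m4] := min_le (x - a) (b - x).
move=> yx.
have h1 : `|y - x| < x - a by lra.
have h2 : `|y - x| < b - x by lra.
have h3 : `|y - x| < e / k by lra.
have n1 : y - x <= `|y - x| := ler_norm _.
have n2 : x - y <= `|y - x| by rewrite -normrN opprB ler_norm.
have ay : a < y < b by apply/andP; split; lra.
rewrite (hJ n0 abin ay) /= -/(tent a b y).
apply: (le_lt_trans (tent_lip _ _ ab)); rewrite -/k.
by rewrite mulrC -ltr_pdivlMr.
Qed.

Lemma g_cont : {within `[0, M], continuous g}.
Proof.
apply/subspace_continuousP => x /= xM.
have xM' : 0 <= x <= M by move: xM; rewrite in_itv.
apply/cvgrPdist_lt => e e0.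
have [d d0 hd] := g_ed xM' e0.
rewrite near_withinE; apply/nbhs_ballP; exists d => //= y.
rewrite /ball /= => hy yM.
rewrite distrC; apply: hd; first by move: yM; rewrite /= in_itv.
by rewrite distrC.
Qed.
Local Notation mu := (@lebesgue_measure R).
Definition F (x : R) := Rintegral lebesgue_measure `[0, x] g.

Lemma g_int : mu.-integrable `[0, M] (EFin \o g).
Proof. by apply: continuous_compact_integrable; [exact: segment_compact|exact: g_cont]. Qed.

Lemma g_intS (u v : R) : 0 <= u -> v <= M -> mu.-integrable `[u, v] (EFin \o g).
Proof.
move=> u0 vM; apply: integrableS g_int => //.
by apply: subset_itvScc; rewrite bnd_simp.
Qed.

Lemma cst_intS (u v c : R) : mu.-integrable `[u, v] (EFin \o cst c).
Proof.
apply: continuous_compact_integrable; first exact: segment_compact.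
by apply: continuous_subspaceT => x; apply: cst_continuous.
Qed.

Lemma F_sub (u v : R) : 0 <= u -> u <= v -> v <= M ->
  F v - F u = Rintegral mu `[u, v] g.
Proof.
move=> u0 uv vM; rewrite /F.
rewrite (@Rintegral_itvB _ _ (BLeft 0) (BRight v) u) ?bnd_simp //; last first.
  exact: g_intS.
rewrite Rintegral_itv_obnd_cbnd //.
apply: integrableS (g_intS u0 vM) => //.
exact: subset_itv_oc_cc.
Qed.

Lemma Rint_cst (u v c : R) : u <= v -> Rintegral mu `[u, v] (cst c) = c * (v - u).
Proof.
move=> uv; rewrite Rintegral_cst //.
have E := lebesgue_measure_itv `[u, v].
have E2 : fine (mu `[u, v]) = v - u.
  transitivity (fine (lebesgue_measure [set` `[u, v]])); first by [].
  by rewrite E /= lte_fin; case: ltP => h //=; lra.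
by rewrite E2.
Qed.

Lemma F_bnd (u v lo hi : R) : 0 <= u -> u <= v -> v <= M ->
  (forall t, u <= t <= v -> lo <= g t <= hi) ->
  lo * (v - u) <= F v - F u <= hi * (v - u).
Proof.
move=> u0 uv vM h; rewrite F_sub // -!Rint_cst //; apply/andP; split.
  apply: le_Rintegral => //; [exact: cst_intS|exact: g_intS|].
  by move=> t; rewrite /= in_itv => /h /andP[].
apply: le_Rintegral => //; [exact: g_intS|exact: cst_intS|].
by move=> t; rewrite /= in_itv => /h /andP[].
Qed.

Lemma F0 : F 0 = 0.
Proof. by rewrite /F set_itv1 Rintegral_set1. Qed.

Lemma F_mono (u v : R) : 0 <= u -> u <= v -> v <= M -> F u <= F v.
Proof.
move=> u0 uv vM; rewrite -subr_ge0 F_sub //; apply: Rintegral_ge0 => t.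
rewrite /= in_itv /= => /andP[ut tv]; apply: g_ge0; apply/andP; split; lra.
Qed.

Lemma F_cont : {within `[0, M], continuous F}.
Proof. exact: (parameterized_integral_continuous (ltW M_gt0) g_int). Qed.

Lemma F_deriv x : 0 <= x <= M -> has_deriv_within `[0, M] F x (g x).
Proof.
move=> xM; rewrite /has_deriv_within.
apply/cvgrPdist_le => e e0.
have [d d0 hd] := g_ed xM e0.
rewrite near_withinE /dnbhs near_withinE; apply/nbhs_ballP; exists d => // t /= hxt tx tM.
have txd : `|t - x| < d by rewrite distrC.
have tM' : 0 <= t <= M by move: tM; rewrite in_itv.
have hb : forall s, Num.min x t <= s <= Num.max x t ->
    g x - e <= g s <= g x + e.
  move=> s hs.
  have sM : 0 <= s <= M.
    by case: (leP x t) hs => _ /andP[? ?]; apply/andP; split; lra.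
  have : `|s - x| < d.
    apply: le_lt_trans txd; rewrite ler_norml.
    have n1 := ler_norm (t - x).
    have n2 : x - t <= `|t - x| by rewrite -normrN opprB ler_norm.
    by case: (leP x t) hs => _ /andP[? ?]; apply/andP; split; lra.
  move/(hd _ sM); rewrite ltr_norml => /andP[? ?]; apply/andP; split; lra.
set Q := (F t - F x) / (t - x).
have tx0 : t - x != 0 by rewrite subr_eq0.
have eQ : F t - F x = Q * (t - x) by rewrite /Q divfK.
rewrite ler_norml; case: (ltP x t) => xt.
  case/andP: xM => x0 _; case/andP: tM' => _ tM''.
  have hb' : forall s, x <= s <= t -> g x - e <= g s <= g x + e.
    have mn : Num.min x t = x by apply: min_l; apply: ltW.
    have mx : Num.max x t = t by apply: max_r; apply: ltW.
    by move=> s hs; apply: hb; rewrite mn mx.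
  have /andP[h1 h2] := F_bnd x0 (ltW xt) tM'' hb'.
  rewrite eQ in h1 h2; apply/andP; split; nra.
case/andP: xM => _ xM; case/andP: tM' => t0 _.
have hb' : forall s, t <= s <= x -> g x - e <= g s <= g x + e.
  have mn : Num.min x t = t by apply: min_r.
  have mx : Num.max x t = x by apply: max_l.
  by move=> s hs; apply: hb; rewrite mn mx.
have /andP[h1 h2] := F_bnd t0 xt xM hb'.
have eQ' : F x - F t = Q * (x - t) by rewrite -opprB eQ; ring.
have xt' : 0 < x - t by rewrite subr_gt0 lt_neqAle tx xt.
rewrite eQ' in h1 h2; apply/andP; split; nra.
Qed.
Local Notation s := (s3 R).

Lemma tent_scale a b y k c : a < b -> 0 < k ->
  tent (a / k + c) (b / k + c) (y / k + c) = tent a b y / Num.sqrt k.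
Proof.
move=> ab k0; rewrite /tent.
have -> : b / k + c - (a / k + c) = (b - a) * k^-1 by ring.
have -> : y / k + c - (a / k + c) = (y - a) * k^-1 by ring.
have -> : b / k + c - (y / k + c) = (b - y) * k^-1 by ring.
rewrite -minr_pMl ?invr_ge0 ?ltW // sqrtrM ?subr_ge0 ?ltW // sqrtrV ?ltW //.
have h1 : Num.sqrt (b - a) != 0 by rewrite gt_eqF // sqrtr_gt0 subr_gt0.
have h2 : Num.sqrt k != 0 by rewrite gt_eqF // sqrtr_gt0.
have h3 : k = Num.sqrt k ^+ 2 by rewrite sqr_sqrtr ?ltW.
rewrite [in X in _ * X = _]h3.
field.
by rewrite h1 h2.
Qed.

Lemma q_gt0' : 0 < q. Proof. by apply: lt_trans hq. Qed.
Lemma sqrt_q : Num.sqrt q = s. Proof. exact: sqrt_q23. Qed.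

Lemma g_T0 y : 0 <= y <= M -> g (y / q) = g y / s.
Proof.
move=> yM.
have yqM : 0 <= y / q <= M.
  case/andP: yM => y0 yM; apply/andP; split; first by rewrite divr_ge0 // ltW // q_gt0'.
  by rewrite ler_pdivrMr ?q_gt0' //; have := M_gt0; have := hq; nra.
case: (AorJ yM) => [yA|].
  rewrite (hA yA) mul0r; apply: hA; split; first by move: yqM; rewrite /= in_itv.
  by move/(@removed_T0 _ _ _ hq hM _ yM); case: yA.
case/inJ => n [[a b] [n0 abin /= yab ->]].
have ab : a < b by case/andP: yab => ? ?; apply: lt_trans; eauto.
have := @Jstage_P0 _ _ _ hq hM _ _ n0 abin; rewrite /P0 /= => P0in.
have yab' : a / q < y / q < b / q.
  by rewrite !ltr_pM2r ?invr_gt0 ?q_gt0'.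
rewrite (hJ (ltn0Sn n) P0in yab') /= -sqrt_q -(tent_scale y 0 ab q_gt0').
by rewrite !addr0.
Qed.

Local Notation c := (cc R M q).

Lemma g_T1 y : 0 <= y <= M -> g (y / q + c) = g y / s.
Proof.
move=> yM.
have yqM : 0 <= y / q + c <= M.
  case/andP: yM => y0 yM; have := @cc_gt0 _ _ _ hq hM.
  have h1 : 0 <= y / q by rewrite divr_ge0 // ltW // q_gt0'.
  have h2 : y / q <= M / q by rewrite ler_pM2r ?invr_gt0 ?q_gt0'.
  rewrite /cc; move=> ?; apply/andP; split; lra.
case: (AorJ yM) => [yA|].
  rewrite (hA yA) mul0r; apply: hA; split; first by move: yqM; rewrite /= in_itv.
  by move/(@removed_T1 _ _ _ hq hM _ yM); case: yA.
case/inJ => n [[a b] [n0 abin /= yab ->]].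
have ab : a < b by case/andP: yab => ? ?; apply: lt_trans; eauto.
have := @Jstage_P1 _ _ _ hq hM _ _ n0 abin; rewrite /P1 /= => P1in.
have yab' : a / q + c < y / q + c < b / q + c.
  by rewrite !ltrD2r !ltr_pM2r ?invr_gt0 ?q_gt0'.
by rewrite (hJ (ltn0Sn n) P1in yab') /= -sqrt_q -(tent_scale y c ab q_gt0').
Qed.
Lemma lin_derive (k c0 x : R) : is_derive x 1 (fun t : R => t * k + c0) k.
Proof.
apply: is_derive_eq.
by rewrite scaler0 add0r addr0 /GRing.scale /= mulr1.
Qed.

Lemma lin_derive1 (k c0 : R) : derive1 (fun t : R => t * k + c0) = cst k.
Proof. by apply/funext => x; rewrite derive1E (@derive_val _ _ _ _ _ _ _ (lin_derive k c0 x)). Qed.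

Lemma F_scale (c0 y : R) : 0 <= y <= M -> 0 <= c0 -> y / q + c0 <= M ->
  (forall t, 0 <= t <= y -> g (t / q + c0) = g t / s) ->
  Rintegral mu `[c0, y / q + c0] g = F y / 3.
Proof.
move=> /andP[y0 yM] c00 yqM hg.
have := @integration_by_substitution_increasing R (fun t => t * q^-1 + c0) g 0 y y0.
rewrite lin_derive1 mul0r add0r.
have lc : continuous (fun t : R => t / q + c0).
  move=> t; apply: differentiable_continuous; apply/derivable1_diffP.
  exact: (@ex_derive _ _ _ _ _ _ _ (lin_derive _ _ t)).
move=> E.
have h1 : {in `[0, y] &, {homo (fun t : R => t / q + c0) : x y / x < y}}.
  by move=> a b _ _ ab; rewrite ltrD2r ltr_pM2r ?invr_gt0 ?q_gt0'.
have h2 : {in `]0, y[, continuous (cst q^-1)} by move=> t _; exact: cst_continuous.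
have h5 : derivable_oo_LRcontinuous (fun t : R => t / q + c0) 0 y.
  split.
  - by move=> t _; exact: (@ex_derive _ _ _ _ _ _ _ (lin_derive _ _ t)).
  - by apply: cvg_at_right_filter; exact: lc.
  - by apply: cvg_at_left_filter; exact: lc.
have h6 : {within `[c0, y / q + c0], continuous g}.
  by apply: continuous_subspaceW g_cont; apply: subset_itvScc; rewrite bnd_simp.
rewrite /Rintegral E //; last 2 first.
  by apply/cvg_ex; exists q^-1; exact: cvg_cst.
  by apply/cvg_ex; exists q^-1; exact: cvg_cst.
transitivity (Rintegral mu `[0, y] (fun x => g x * 3^-1)); last first.
  by rewrite RintegralZr //; apply: g_intS.
congr fine; apply: eq_integral => t.
rewrite inE /= in_itv /= => ht.
congr (_%:E); transitivity (g (t / q + c0) * q^-1); first by [].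
rewrite hg // -(q23_s3 R).
have s0 : s != 0 by rewrite gt_eqF // s3_gt0.
have q0 : q != 0 by rewrite gt_eqF // q_gt0'.
by field; rewrite s0 q0.
Qed.
Lemma q_ge1 : 1 <= q. Proof. by have := hq; lra. Qed.

Lemma yq_le y : 0 <= y <= M -> 0 <= y / q <= M / q.
Proof.
case/andP => y0 yM; apply/andP; split; first by rewrite divr_ge0 // ltW // q_gt0'.
by rewrite ler_pM2r ?invr_gt0 ?q_gt0'.
Qed.

Lemma Mq_le : M / q <= M.
Proof. by rewrite ler_pdivrMr ?q_gt0' //; have := M_gt0; have := hq; nra. Qed.

Lemma F_T0 y : 0 <= y <= M -> F (y / q) = F y / 3.
Proof.
move=> yM; have := yq_le yM; have := Mq_le => h1 /andP[h2 h3].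
have hyq : y / q + 0 <= M by rewrite addr0; apply: le_trans h1.
have hg : forall t, 0 <= t <= y -> g (t / q + 0) = g t / s.
  move=> t /andP[t0 ty]; rewrite addr0; apply: g_T0.
  by case/andP: yM => _ yM; apply/andP; split => //; apply: le_trans yM.
have E := F_scale yM (lexx 0) hyq hg.
rewrite addr0 in E.
by rewrite -E.
Qed.
Lemma c_ge0 : 0 <= c. Proof. exact: ltW (@cc_gt0 _ _ _ hq hM). Qed.
Lemma c_Mq : c + M / q = M. Proof. by rewrite /cc subrK. Qed.

Lemma F_T1 y : 0 <= y <= M -> F (y / q + c) = F c + F y / 3.
Proof.
move=> yM; have /andP[h2 h3] := yq_le yM.
have hyq : y / q + c <= M by have := c_Mq; lra.
have hg : forall t, 0 <= t <= y -> g (t / q + c) = g t / s.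
  move=> t /andP[t0 ty]; apply: g_T1.
  by case/andP: yM => _ yM; apply/andP; split => //; apply: le_trans yM.
have E := F_scale yM c_ge0 hyq hg.
have hc : c <= y / q + c by rewrite lerDr.
have E2 := F_sub c_ge0 hc hyq.
rewrite E in E2; lra.
Qed.

Lemma quad_derive (k a x : R) :
  is_derive x 1 (fun t : R => k * ((t - a) * (t - a))) (k * (2 * (x - a))).
Proof.
apply: is_derive_eq.
by rewrite /GRing.scale /=; ring.
Qed.

Lemma quad_cont (k a : R) : continuous (fun t : R => k * ((t - a) * (t - a))).
Proof.
move=> t; apply: differentiable_continuous; apply/derivable1_diffP.
exact: (@ex_derive _ _ _ _ _ _ _ (quad_derive k a t)).
Qed.

Lemma FTC_quad (a b k a0 : R) : 0 <= a -> a < b -> b <= M ->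
  (forall t, a < t < b -> g t = k * (2 * (t - a0))) ->
  F b - F a = k * ((b - a0) * (b - a0)) - k * ((a - a0) * (a - a0)).
Proof.
move=> a0' ab bM hg.
rewrite F_sub //; last exact: ltW.
have := @continuous_FTC2 R g (fun t => k * ((t - a0) * (t - a0))) a b ab.
move=> E; rewrite /Rintegral E //=.
- by apply: continuous_subspaceW g_cont; apply: subset_itvScc; rewrite bnd_simp //;
    apply: le_trans (ltW ab) bM.
- split.
  + by move=> t _; exact: (@ex_derive _ _ _ _ _ _ _ (quad_derive k a0 t)).
  + by apply: cvg_at_right_filter; exact: quad_cont.
  + by apply: cvg_at_left_filter; exact: quad_cont.
- move=> t; rewrite in_itv /= => ht.
  by rewrite derive1E (@derive_val _ _ _ _ _ _ _ (quad_derive k a0 t)) hg.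
Qed.

Lemma F_J1 : F c - F (M / q) = 1 / 3.
Proof.
set a := M / q; set b := c.
have abin : (a, b) \in Jstage M q 1 by rewrite (@Jstage1 _ _ _ hq hM) inE.
have ell : b - a = q^-1 by rewrite (@Jstage_len _ _ _ _ _ abin) expr1.
have a0 : 0 < a := @Lq_gt0 _ _ _ hq hM.
have ab : a < b := @Lq_lt_cc _ _ _ hq hM.
have bM : b <= M := ltW (@cc_lt_L _ _ _ hq hM).
set m := (a + b) / 2.
set k := 4 / Num.sqrt (b - a).
have gt : forall t, a < t < b -> g t = k * Num.min (t - a) (b - t).
  by move=> t ht; rewrite (hJ (isT : (0 < 1)%N) abin ht).
have E1 : F m - F a = (k / 2) * ((m - a) * (m - a)) - (k / 2) * ((a - a) * (a - a)).
  apply: FTC_quad; [exact: ltW|rewrite /m; lra|rewrite /m; lra|].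
  move=> t /andP[ha tm]; rewrite gt; last by apply/andP; split; rewrite /m in tm; lra.
  case: (min_cases (t - a) (b - t)) => -[-> ?]; first by field.
  have -> : b - t = t - a by rewrite /m in tm; lra.
  by field.
have E2 : F b - F m = (- (k / 2)) * ((b - b) * (b - b)) - (- (k / 2)) * ((m - b) * (m - b)).
  apply: FTC_quad; [rewrite /m; lra|rewrite /m; lra|exact: bM|].
  move=> t /andP[mt tb]; rewrite gt; last by apply/andP; split; rewrite /m in mt; lra.
  case: (min_cases (t - a) (b - t)) => -[-> ?]; last by field.
  have -> : t - a = b - t by rewrite /m in mt; lra.
  by field.
have -> : F b - F a = (F m - F a) + (F b - F m) by ring.
rewrite E1 E2 /k /m ell sqrtrV ?invr_ge0 ?ltW ?q_gt0' // sqrt_q.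
have s0 : s != 0 by rewrite gt_eqF // s3_gt0.
have hb : b = a + q^-1 by lra.
rewrite hb (q23E R).
have s4 : s ^+ 2 * s ^+ 2 = 3 * s.
  by rewrite -exprD (_ : (2 + 2 = 3.+1)%N) // exprS (s3_cube R) mulrC.
transitivity (s / (s ^+ 2 * s ^+ 2)); first by field.
by rewrite s4; field.
Qed.
Lemma M_in : 0 <= M <= M. Proof. by rewrite lexx andbT ltW. Qed.
Lemma z_in : (0:R) <= 0 <= M. Proof. by rewrite lexx ltW. Qed.

Lemma F_M : F M = 1.
Proof.
have h1 := F_T1 M_in.
have e : M / q + c = M by rewrite addrC c_Mq.
rewrite e in h1.
have h2 := F_J1; have h3 := F_T0 M_in.
lra.
Qed.

Lemma F_Mq : F (M / q) = 1 / 3.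
Proof. by rewrite F_T0 ?M_in // F_M. Qed.

Lemma F_c : F c = 2 / 3.
Proof. have := F_J1; rewrite F_Mq; lra. Qed.

Lemma F_range x : 0 <= x <= M -> 0 <= F x <= 1.
Proof.
case/andP => x0 xM; rewrite -F0 -F_M; apply/andP; split; apply: F_mono => //.

Qed.

Lemma F_lb (u v lo : R) : 0 <= u -> u <= v -> v <= M ->
  (forall t, u <= t <= v -> lo <= g t) -> lo * (v - u) <= F v - F u.
Proof.
move=> u0 uv vM h; rewrite F_sub // -Rint_cst //.
apply: le_Rintegral => //; (try exact: cst_intS); (try exact: g_intS).
all: by move=> t; rewrite /= in_itv /= => /h.
Qed.

Lemma F_J1_strict x : M / q < x < c -> 1 / 3 < F x < 2 / 3.
Proof.
set a := M / q; set b := c; move=> /andP[ax xb].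
have abin : (a, b) \in Jstage M q 1 by rewrite (@Jstage1 _ _ _ hq hM) inE.
have a0 : 0 < a := @Lq_gt0 _ _ _ hq hM.
have bM : b <= M := ltW (@cc_lt_L _ _ _ hq hM).
set k := 4 / Num.sqrt (b - a).
have k0 : 0 < k by rewrite divr_gt0 // sqrtr_gt0 subr_gt0 (lt_trans ax).
have gt : forall t, a < t < b -> g t = k * Num.min (t - a) (b - t).
  by move=> t ht; rewrite (hJ (isT : (0 < 1)%N) abin ht).
rewrite -F_Mq -F_c; apply/andP; split.
- set u := (a + x) / 2.
  set lo := k * Num.min (u - a) (b - x).
  have lo0 : 0 < lo.
    by rewrite mulr_gt0 //; case: (min_cases (u - a) (b - x)) => -[-> _]; rewrite /u; lra.
  have hb : forall t, u <= t <= x -> lo <= g t.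
    move=> t /andP[ut tx]; rewrite gt; last by apply/andP; split; rewrite /u in ut; lra.
    rewrite ler_pM2l //.
    case: (min_cases (u - a) (b - x)) => -[-> ?];
      case: (min_cases (t - a) (b - t)) => -[-> ?]; lra.
  have ha : a <= u by rewrite /u; lra.
  have h1 := F_lb (ltW (lt_le_trans a0 ha)) (ltW (_ : u < x)) (le_trans (ltW xb) bM) hb.
  have h2 := F_mono (ltW a0) ha (le_trans (ltW (_ : u < x)) (le_trans (ltW xb) bM)).
  have : 0 < lo * (x - u) by rewrite mulr_gt0 // subr_gt0 /u; lra.
  move: h1 h2; rewrite /u; lra.
- set v := (x + b) / 2.
  set lo := k * Num.min (x - a) (b - v).
  have lo0 : 0 < lo.
    by rewrite mulr_gt0 //; case: (min_cases (x - a) (b - v)) => -[-> _]; rewrite /v; lra.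
  have hb : forall t, x <= t <= v -> lo <= g t.
    move=> t /andP[xt tv]; rewrite gt; last by apply/andP; split; rewrite /v in tv; lra.
    rewrite ler_pM2l //.
    case: (min_cases (x - a) (b - v)) => -[-> ?];
      case: (min_cases (t - a) (b - t)) => -[-> ?]; lra.
  have vb : v <= b by rewrite /v; lra.
  have x0 : 0 <= x by have := lt_trans a0 ax; apply: ltW.
  have h1 := F_lb x0 (ltW (_ : x < v)) (le_trans vb bM) hb.
  have h2 := F_mono (le_trans x0 (ltW (_ : x < v))) vb bM.
  have : 0 < lo * (v - x) by rewrite mulr_gt0 // subr_gt0 /v; lra.
  move: h1 h2; rewrite /v; lra.
Qed.
Let h3 : 2 < (3 : R). Proof. lra. Qed.
Let h1 : (1 : R) * (3 - 2) = 1. Proof. lra. Qed.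
Let cc3 : cc R 1 3 = 2 / 3. Proof. rewrite /cc; lra. Qed.

Lemma qx_div x : x = (q * x) / q.
Proof. have q0 : q != 0 by rewrite gt_eqF // q_gt0'. by field. Qed.

Lemma PF1 n x : (0 < n)%N -> Jset R M q n x -> Jset R 1 3 n (F x).
Proof.
elim: n x => [//|[|n] IH] x _ hx.
  have := (@Jset1 _ _ _ hq hM x).1 hx => /F_J1_strict h.
  apply/(@Jset1 _ _ _ h3 h1 (F x)). by rewrite cc3.
apply/(@Jset_succ _ _ _ h3 h1 n.+1 (F x) isT).
case/(@Jset_succ _ _ _ hq hM n.+1 x isT): hx => h.
  have /andP[y0 yM] := @Jset_in _ _ _ hq hM _ _ (ltn0Sn _) h.
  have yM' : 0 <= q * x <= M by rewrite ltW // ltW.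
  left; rewrite [in F x](qx_div x) F_T0 //.
  have -> : 3 * (F (q * x) / 3) = F (q * x) by field.
  exact: IH.
have /andP[y0 yM] := @Jset_in _ _ _ hq hM _ _ (ltn0Sn _) h.
have yM' : 0 <= q * (x - c) <= M by rewrite ltW // ltW.
right; have -> : x = (q * (x - c)) / q + c by rewrite -qx_div subrK.
rewrite F_T1 // F_c cc3.
have -> : 3 * (2 / 3 + F (q * (x - c)) / 3 - 2 / 3) = F (q * (x - c)) by field.
exact: IH.
Qed.
Lemma A_notJ1 x : Aset x -> ~ (M / q < x < c).
Proof.
case=> _ xr h; apply: xr; exists 1%N; split => //.
exact/(@Jset1 _ _ _ hq hM x).
Qed.

Lemma A_M x : Aset x -> 0 <= x <= M.
Proof. by case=> /= + _; rewrite in_itv. Qed.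

Lemma PF2 n x : (0 < n)%N -> Aset x -> ~ Jset R 1 3 n (F x).
Proof.
elim: n x => [//|[|n] IH] x _ xA.
  move/(@Jset1 _ _ _ h3 h1 (F x)); rewrite cc3 => /andP[hl hr].
  have xM := A_M xA; have nJ := A_notJ1 xA.
  case/andP: (xM) => x0 xM'.
  case: (leP x (M / q)) => h.
    have := F_mono x0 h Mq_le; rewrite F_Mq; lra.
  have cx : c <= x by rewrite leNgt; apply/negP => cx; apply: nJ; apply/andP.
  have := F_mono c_ge0 cx xM'; rewrite F_c; lra.
move/(@Jset_succ _ _ _ h3 h1 n.+1 (F x) isT).
have xM := A_M xA; have nJ := A_notJ1 xA.
case/andP: (xM) => x0 xM'.
case: (leP x (M / q)) => h.
  set y := q * x.
  have yM : 0 <= y <= M.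
    apply/andP; split; first by rewrite /y mulr_ge0 // ltW // q_gt0'.
    by rewrite /y -ler_pdivlMl ?q_gt0' // mulrC.
  have ex : x = y / q := qx_div x.
  have yA : Aset y.
    split; first by move: yM; rewrite /= in_itv.
    by move/(@removed_T0 _ _ _ hq hM _ yM); rewrite -ex; case: xA.
  rewrite ex F_T0 // cc3 => -[].
    have -> : 3 * (F y / 3) = F y by field.
    exact: IH.
  move/(@Jset_in _ _ _ h3 h1 _ _ (ltn0Sn _)) => /andP[+ _].
  have := F_range yM; lra.
have cx : c <= x by rewrite leNgt; apply/negP => cx; apply: nJ; apply/andP.
set y := q * (x - c).
have yM : 0 <= y <= M.
  apply/andP; split; first by rewrite /y mulr_ge0 // ?subr_ge0 // ltW // q_gt0'.
  rewrite /y -ler_pdivlMl ?q_gt0' // mulrC.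
  have := c_Mq; lra.
have ex : x = y / q + c by rewrite /y -qx_div subrK.
have yA : Aset y.
  split; first by move: yM; rewrite /= in_itv.
  by move/(@removed_T1 _ _ _ hq hM _ yM); rewrite -ex; case: xA.
rewrite ex F_T1 // F_c cc3 => -[].
  move/(@Jset_in _ _ _ h3 h1 _ _ (ltn0Sn _)) => /andP[_].
  have := F_range yM; lra.
have -> : 3 * (2 / 3 + F y / 3 - 2 / 3) = F y by field.
exact: IH.
Qed.
Lemma main_res : let f := fun x : R => Rintegral lebesgue_measure `[0, x] g in
  (exists f' : R -> R,
      {within `[0, M], continuous f'} /\
      (forall x, x \in `[0, M] -> has_deriv_within `[0, M] f x (f' x)) /\
      (forall x, x \in `[0, M] -> (f' x = 0 <-> @Aset R x))) /\
  f @` @Aset R = @cantor_ternary R.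
Proof.
move=> f; have -> : f = F by [].
split.
  exists g; split; first exact: g_cont.
  split.
    move=> x; rewrite in_itv /= => xM; exact: F_deriv.
  move=> x; rewrite in_itv /= => xM; split; last exact: hA.
  move=> gx0; case: (AorJ xM) => // /g_pos; rewrite gx0 ltxx.
  by [].
apply/seteqP; split.
  move=> _ [x xA <-]; split.
    by rewrite /= in_itv /=; apply: F_range; apply: A_M.
  by case=> n [n0 h]; apply: (PF2 n0 xA h).
move=> y [y01 ynr].
have y01' : 0 <= y <= 1 by move: y01; rewrite /= in_itv.
have hv : Num.min (F 0) (F M) <= y <= Num.max (F 0) (F M).
  rewrite F0 F_M.
  have -> : Num.min (0:R) 1 = 0 by apply: min_l; lra.
  have -> : Num.max (0:R) 1 = 1 by apply: max_r; lra.
  exact: y01'.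
have [x xM fx] := IVT (ltW M_gt0) F_cont hv.
exists x => //; split => //.
move=> [n [n0 h]]; apply: ynr; exists n; split => //.
by rewrite -fx; apply: PF1.
Qed.

End Main.

Unset Implicit Arguments. Set Strict Implicit.

Theorem lemma4 (R : realType) (g : R -> R) :
  (* g = 0 on A *)
  (forall x, @Aset R x -> g x = 0) ->
  (* g x = 4 / L(J_n^k)^(1/2) * dist(x, boundary J_n^k) on J_n^k *)
  (forall (n : nat) (ab : R * R), (0 < n)%N -> ab \in Jstage (@Mconst R) (@q23 R) n ->
     forall x, ab.1 < x < ab.2 ->
       g x = 4 / Num.sqrt (ab.2 - ab.1) * Num.min (x - ab.1) (ab.2 - x)) ->
  let f := fun x : R => Rintegral lebesgue_measure `[0, x] g in
  (* (1) f is C^1 on [0,M], and (2) f'(x) = 0 iff x in A *)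
  (exists f' : R -> R,
      {within `[0, @Mconst R], continuous f'} /\
      (forall x, x \in `[0, @Mconst R] -> has_deriv_within `[0, @Mconst R] f x (f' x)) /\
      (forall x, x \in `[0, @Mconst R] -> (f' x = 0 <-> @Aset R x))) /\
  (* (3) f(A) = C *)
  f @` @Aset R = @cantor_ternary R.
Proof.
move=> hA hJ; exact: (main_res hA hJ).
Qed.
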